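(* Let $k$ be a field and $w\in k(X)$ a non-constant rational function, viewed as a morphism $w\colon\mathbb{P}^1\to\mathbb{P}^1$, such that $k(X)/k(w)$ is separable and all ramification of $w$ is tame. Assume that $w$ has a pole of order at least $2$ at $\infty$ and that all other poles of $w$ over $\bar k$ are simple. Assume further that the numerator $g\in k[X]$ of the derivative $w'$ (written in lowest terms) is irreducible in $k[X]$ or the square of an irreducible polynomial in $k[X]$. Then $w$ is indecomposable over $k$, i.e. there are no $u,v\in k(X)$ with $\deg u>1$, $\deg v>1$ and $w=v\circ u$.
   Context: Ramification of $w$ at a point is tame if the ramification index there is not divisible by $\mathrm{char}(k)$. The degree of a rational function $u=a/b$ in lowest terms is $\max\{\deg a,\deg b\}$. *)

(* Defs.v *)
From HB Require Import structures.
From mathcomp Require Import all_boot all_order all_algebra.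
Set Implicit Arguments. Unset Strict Implicit. Unset Printing Implicit Defensive.
Import Order.TTheory GRing.Theory Num.Theory.
Local Open Scope ring_scope.

(* A rational function over a field K is represented by a pair (a, b) of
   polynomials with b != 0 and coprimep a b (lowest terms): it denotes a/b. *)
Definition rat_lowest (K : fieldType) (a b : {poly K}) : Prop :=
  b != 0 /\ coprimep a b.

Definition rdeg (K : fieldType) (a b : {poly K}) : nat :=
  maxn (size a).-1 (size b).-1.

(* Homogenised evaluation: for e of degree <= n,
   homog n e c d = d^n * e(c/d) = \sum_i e_i c^i d^(n-i). *)
Definition homog (K : fieldType) (n : nat) (e c d : {poly K}) : {poly K} :=
  \sum_(i < size e) e`_i *: (c ^+ i * d ^+ (n - i)).

(* (e/f) o (c/d) = homog n e c d / homog n f c d with n = rdeg e f.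
   So  a/b = (e/f) o (c/d)  iff  a * homog n f c d = b * homog n e c d
   (the denominators being nonzero). *)
Definition is_composition (K : fieldType) (a b e f c d : {poly K}) : Prop :=
  let n := rdeg e f in
  homog n f c d != 0 /\ a * homog n f c d = b * homog n e c d.

Definition indecomposable (K : fieldType) (a b : {poly K}) : Prop :=
  ~ exists c d e f : {poly K},
      [/\ rat_lowest c d, rat_lowest e f, (1 < rdeg c d)%N, (1 < rdeg e f)%N
        & is_composition a b e f c d].

(* Ramification index of w = a/b (lowest terms, over a field L) at a finite
   point x of the affine line: if x is a pole it is the multiplicity of x
   as a root of b; otherwise it is the multiplicity of x as a root of
   a - w(x) b  (i.e. the order of vanishing of w - w(x) at x). *)
Definition ram_index_fin (L : fieldType) (a b : {poly L}) (x : L) : nat :=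
  if b.[x] == 0 then mup x b else mup x (a - (a.[x] / b.[x]) *: b).

(* Ramification index at infinity: if deg a > deg b, w has a pole of order
   deg a - deg b there; otherwise w(oo) = c (c = lead a / lead b if the
   degrees agree, 0 otherwise) and the index is deg b - deg (a - c b),
   the order of vanishing of w - c at infinity. *)
Definition ram_index_inf (L : fieldType) (a b : {poly L}) : nat :=
  if (size b < size a)%N then (size a - size b)%N
  else let c := if size a == size b then lead_coef a / lead_coef b else 0 in
       (size b - size (a - c *: b)%R)%N.

(* All ramification of w = a/b is tame: at every point of P^1 over every
   field extension L of K (in particular over an algebraic closure), the
   ramification index is not divisible by char K. *)
Definition tame_ramification (K : fieldType) (a b : {poly K}) : Prop :=
  forall p : nat, p \in [pchar K] ->
    ~~ (p %| ram_index_inf a b)%N /\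
    forall (L : fieldType) (f : {rmorphism K -> L}) (x : L),
      ~~ (p %| ram_index_fin (map_poly f a) (map_poly f b) x)%N.

(* numerator, in lowest terms, of w' = (a'b - ab')/b^2 (defined up to
   a nonzero constant) *)
Definition deriv_num (K : fieldType) (a b : {poly K}) : {poly K} :=
  let n := a^`() * b - a * b^`() in n %/ gcdp n (b ^+ 2).

(* Main.v *)
Require Import Defs.
From HB Require Import structures.
From mathcomp Require Import all_boot all_order all_algebra all_field.
From mathcomp Require Import ring zify.
From Stdlib Require Import Classical.
Set Implicit Arguments. Unset Strict Implicit. Unset Printing Implicit Defensive.
Import GRing.Theory.
Local Open Scope ring_scope.

Section Hom.
Variable K : fieldType.
Implicit Types (e f p q c d g h : {poly K}).

Definition hom (n : nat) e c d : {poly K} :=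
  \sum_(i < n.+1) e`_i *: (c ^+ i * d ^+ (n - i)).

Lemma homog_hom n e c d : (size e <= n.+1)%N -> homog n e c d = hom n e c d.
Proof.
move=> se; rewrite /homog /hom.
rewrite (big_ord_widen n.+1 (fun i => e`_i *: (c ^+ i * d ^+ (n - i)))) //.
rewrite big_mkcond /=; apply: eq_bigr => i _.
by case: ifP => // /negbT; rewrite -leqNgt => /(nth_default 0) ->; rewrite scale0r.
Qed.

Lemma homD n p q c d : hom n (p + q) c d = hom n p c d + hom n q c d.
Proof. by rewrite /hom -big_split; apply: eq_bigr => i _; rewrite coefD scalerDl. Qed.

Lemma homZ n a p c d : hom n (a *: p) c d = a *: hom n p c d.
Proof. by rewrite /hom scaler_sumr; apply: eq_bigr => i _; rewrite coefZ scalerA. Qed.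

Lemma hom0 n c d : hom n 0 c d = 0.
Proof. by rewrite /hom big1 // => i _; rewrite coef0 scale0r. Qed.

Lemma homN n p c d : hom n (- p) c d = - hom n p c d.
Proof. by rewrite -scaleN1r homZ scaleN1r. Qed.

Lemma homB n p q c d : hom n (p - q) c d = hom n p c d - hom n q c d.
Proof. by rewrite homD homN. Qed.

Lemma hom_sum n I (r : seq I) (F : I -> {poly K}) c d :
  hom n (\sum_(i <- r) F i) c d = \sum_(i <- r) hom n (F i) c d.
Proof.
elim: r => [|x r IH]; first by rewrite !big_nil hom0.
by rewrite !big_cons homD IH.
Qed.

Lemma hom_Xn n i c d : (i <= n)%N -> hom n 'X^i c d = c ^+ i * d ^+ (n - i).
Proof.
move=> le_in; rewrite /hom (bigD1 (Ordinal (n:=n.+1) (m:=i) le_in)) //=.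
rewrite coefXn eqxx scale1r big1 ?addr0 // => j /eqP neq.
rewrite coefXn; case: eqP => [ji|]; last by rewrite scale0r.
by exfalso; apply: neq; apply: val_inj.
Qed.


Lemma poly_expand n e : (size e <= n.+1)%N -> e = \sum_(i < n.+1) e`_i *: 'X^i.
Proof.
move=> se; rewrite -poly_def; apply/polyP => i.
rewrite coef_poly; case: ifP => // /negbT; rewrite -leqNgt => h.
by rewrite nth_default // (leq_trans se h).
Qed.

Lemma hom_C n a c d : hom n a%:P c d = a *: d ^+ n.
Proof.
by rewrite -alg_polyC -(expr0 'X) homZ hom_Xn // expr0 mul1r subn0.
Qed.


Lemma lin_ext n (Phi Psi : {poly K} -> {poly K}) :
  (forall a p q, Phi (a *: p + q) = a *: Phi p + Phi q) ->
  (forall a p q, Psi (a *: p + q) = a *: Psi p + Psi q) ->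
  (forall i, (i <= n)%N -> Phi 'X^i = Psi 'X^i) ->
  forall e, (size e <= n.+1)%N -> Phi e = Psi e.
Proof.
move=> LPhi LPsi Hm e se.
have Z (F : {poly K} -> {poly K}) : (forall a p q, F (a *: p + q) = a *: F p + F q) -> F 0 = 0.
  move=> LF; have := LF 1 0 0; rewrite !scale1r addr0 => h.
  by apply: (@addrI _ (F 0)); rewrite addr0 -h.
have S (F : {poly K} -> {poly K}) : (forall a p q, F (a *: p + q) = a *: F p + F q) ->
   forall N (G : nat -> {poly K}), F (\sum_(i < N) G i) = \sum_(i < N) F (G i).
  move=> LF; elim=> [|N IH] G; first by rewrite !big_ord0 (Z F LF).
  by rewrite !big_ord_recr /= -IH -[X in F (X + _)]scale1r LF scale1r.
rewrite (poly_expand se) (S _ LPhi _ (fun i => e`_i *: 'X^i)).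
rewrite (S _ LPsi _ (fun i => e`_i *: 'X^i)); apply: eq_bigr => i _.
rewrite -[_ *: _]addr0 LPhi LPsi (Z _ LPhi) (Z _ LPsi) Hm //.
by rewrite -ltnS.
Qed.

Lemma homL n c d a p q : hom n (a *: p + q) c d = a *: hom n p c d + hom n q c d.
Proof. by rewrite homD homZ. Qed.

Lemma homM n1 n2 p q c d : (size p <= n1.+1)%N -> (size q <= n2.+1)%N ->
  hom (n1 + n2) (p * q) c d = hom n1 p c d * hom n2 q c d.
Proof.
move=> sp sq.
pose Phi p := hom (n1 + n2) (p * q) c d.
pose Psi p := hom n1 p c d * hom n2 q c d.
apply: (@lin_ext n1 Phi Psi) => //.
- by move=> a x y; rewrite /Phi mulrDl -scalerAl homL.
- by move=> a x y; rewrite /Psi homL mulrDl scalerAl.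
move=> i le_i; rewrite /Phi /Psi hom_Xn //.
pose Phi2 q := hom (n1 + n2) ('X^i * q) c d.
pose Psi2 q := c ^+ i * d ^+ (n1 - i) * hom n2 q c d.
apply: (@lin_ext n2 Phi2 Psi2) => //.
- by move=> a x y; rewrite /Phi2 mulrDr -scalerAr homL.
- by move=> a x y; rewrite /Psi2 homL mulrDr -scalerAr.
move=> j le_j; rewrite /Phi2 /Psi2 -exprD hom_Xn; last by lia.
rewrite hom_Xn //.
have -> : (n1 + n2 - (i + j) = (n1 - i) + (n2 - j))%N by lia.
by rewrite exprD exprD; ring.
Qed.


Lemma size_sum_le N (F : nat -> {poly K}) B :
  (forall i, (i < N)%N -> (size (F i) <= B)%N) -> (size (\sum_(i < N) F i)%R <= B)%N.
Proof.
move=> H; elim: N H => [|N IH] H; first by rewrite big_ord0 size_poly0.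
rewrite big_ord_recr /= (leq_trans (size_polyD _ _)) // geq_max H // andbT.
by apply: IH => i lt; apply: H; rewrite ltnS ltnW.
Qed.

Lemma size_exp_le M c i : (size c <= M.+1)%N -> (size (c ^+ i)%R <= (i * M).+1)%N.
Proof.
move=> sc; apply: (leq_trans (size_poly_exp_leq _ _)); rewrite ltnS mulnC.
by apply: leq_mul => //; lia.
Qed.

Lemma size_mon_le M c d i j : (size c <= M.+1)%N -> (size d <= M.+1)%N ->
  (size (c ^+ i * d ^+ j)%R <= ((i + j) * M).+1)%N.
Proof.
move=> sc sd; apply: (leq_trans (size_polyMleq _ _)).
have h1 := size_exp_le i sc; have h2 := size_exp_le j sd.
rewrite mulnDl; lia.
Qed.

Lemma hom_size_le n M e c d : (size c <= M.+1)%N -> (size d <= M.+1)%N ->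
  (size (hom n e c d) <= (n * M).+1)%N.
Proof.
move=> sc sd; rewrite /hom.
apply: (size_sum_le (F := fun i => e`_i *: (c ^+ i * d ^+ (n - i)))) => i lti.
apply: (leq_trans (size_scale_leq _ _)).
apply: (leq_trans (size_mon_le i (n - i) sc sd)).
by rewrite subnKC // -ltnS.
Qed.

Lemma hom_pow k g c d : (size g <= 2)%N -> hom k (g ^+ k) c d = (hom 1 g c d) ^+ k.
Proof.
move=> sg; elim: k => [|k IH].
  by rewrite !expr0 -{1}polyC1 hom_C scale1r expr0.
rewrite exprS -add1n homM //; first by rewrite IH exprS.
have := @size_exp_le 1 g k sg; by rewrite muln1.
Qed.

Lemma hom_comp n e g h c d : (size g <= 2)%N -> (size h <= 2)%N -> (size e <= n.+1)%N ->
  hom n (hom n e g h) c d = hom n e (hom 1 g c d) (hom 1 h c d).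
Proof.
move=> sg sh; apply: (@lin_ext n (fun e => hom n (hom n e g h) c d)
   (fun e => hom n e (hom 1 g c d) (hom 1 h c d))).
- by move=> a x y; rewrite !homL.
- by move=> a x y; rewrite !homL.
move=> i le_in; rewrite !hom_Xn //.
rewrite -{1}(subnKC le_in) homM; first by rewrite (hom_pow i _ _ sg) (hom_pow (n - i) _ _ sh).
- by have := @size_exp_le 1 g i sg; rewrite muln1.
- by have := @size_exp_le 1 h (n - i) sh; rewrite muln1.
Qed.

Lemma hom10 n g : (size g <= n.+1)%N -> hom n g 1 0 = (g`_n)%:P.
Proof.
move=> sg; rewrite /hom big_ord_recr /= subnn expr0 mulr1 expr1n big1 ?add0r.
  by rewrite -mul_polyC mulr1.
move=> i _; have ni : (n - i)%N != 0%N by rewrite subn_eq0 -ltnNge ltn_ord.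
by rewrite expr0n (negbTE ni) mulr0 scaler0.
Qed.

Lemma homP1 n e x : (size e <= n.+1)%N -> hom n e x%:P 1 = (e.[x])%:P.
Proof.
move=> se; rewrite (horner_coef_wide _ se) /hom raddf_sum /=; apply: eq_bigr => i _.
by rewrite expr1n mulr1 polyCM rmorphXn mul_polyC.
Qed.

Lemma hom_low n e c d : (size e <= n.+2)%N ->
  hom n.+1 e c d = e`_n.+1 *: c ^+ n.+1 + d * hom n (e - e`_n.+1 *: 'X^(n.+1)) c d.
Proof.
move=> se.
have sl : (size (e - e`_n.+1 *: 'X^(n.+1))%R <= n.+1)%N.
  apply/leq_sizeP => j lej; rewrite coefB coefZ coefXn.
  case: (ltngtP j n.+1) => [|jn|->]; first by rewrite ltnNge lej.
    by rewrite mulr0 subr0 nth_default // (leq_trans se).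
  by rewrite mulr1 subrr.
rewrite -{1}(subrK (e`_n.+1 *: 'X^(n.+1)) e) (homD n.+1) addrC (homZ n.+1) hom_Xn //.
rewrite subnn expr0 mulr1.
congr (_ + _).
have := @homM 1 n 1 (e - e`_n.+1 *: 'X^(n.+1)) c d; rewrite mul1r add1n => ->//.
  by rewrite -polyC1 hom_C scale1r expr1.
by rewrite size_polyC oner_eq0.
Qed.


Definition Dp p q : {poly K} := p^`() * q - p * q^`().

Lemma dpow c i : c * (c ^+ i)^`() = i%:R * c^`() * c ^+ i.
Proof.
rewrite deriv_exp; case: i => [|i]; first by rewrite mulr0n mulr0 mul0r mul0r.
by rewrite -mulr_natl exprS /=; ring.
Qed.

Lemma dmon c d i k : c * d * (c ^+ i * d ^+ k)^`() =
  c ^+ i * d ^+ k * (i%:R * c^`() * d + k%:R * c * d^`()).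
Proof.
transitivity (d * d ^+ k * (c * (c ^+ i)^`()) + c * c ^+ i * (d * (d ^+ k)^`())).
  by rewrite derivM; ring.
by rewrite dpow dpow; ring.
Qed.

Lemma Dmon c d i k j l : c * d * Dp (c ^+ i * d ^+ k) (c ^+ j * d ^+ l) =
  c ^+ i * d ^+ k * (c ^+ j * d ^+ l) *
    ((i%:R - j%:R) * c^`() * d + (k%:R - l%:R) * c * d^`()).
Proof.
rewrite /Dp.
transitivity ((c * d * (c ^+ i * d ^+ k)^`()) * (c ^+ j * d ^+ l) -
   (c ^+ i * d ^+ k) * (c * d * (c ^+ j * d ^+ l)^`())); first by ring.
by rewrite !dmon; ring.
Qed.

Lemma DXmon i j : ('X : {poly K}) * Dp 'X^i 'X^j = (i%:R - j%:R) * 'X^(i + j).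
Proof.
rewrite /Dp.
transitivity ((('X : {poly K}) * ('X ^+ i)^`()) * 'X^j - 'X^i * ('X * ('X ^+ j)^`())); first by ring.
rewrite !dpow derivX exprD; ring.
Qed.

Lemma DpL1 a x y q : Dp (a *: x + y) q = a *: Dp x q + Dp y q.
Proof.
rewrite /Dp derivD derivZ -!mul_polyC; ring.
Qed.

Lemma DpL2 a x y p : Dp p (a *: x + y) = a *: Dp p x + Dp p y.
Proof.
rewrite /Dp derivD derivZ -!mul_polyC; ring.
Qed.

Lemma hom_natM n m p c d : hom n (m%:R * p) c d = m%:R * hom n p c d.
Proof. by rewrite -polyC_natr mul_polyC homZ -mul_polyC. Qed.

Lemma chain n e f c d : (size e <= n.+1)%N -> (size f <= n.+1)%N ->
  c * d * Dp (hom n e c d) (hom n f c d) =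
  hom (n + n) ('X * Dp e f) c d * (c^`() * d - c * d^`()).
Proof.
move=> se sf.
pose Du := c^`() * d - c * d^`().
apply: (@lin_ext n (fun e => c * d * Dp (hom n e c d) (hom n f c d))
   (fun e => hom (n + n) ('X * Dp e f) c d * Du)) => //.
- move=> a x y; rewrite homL DpL1 -!mul_polyC; ring.
- by move=> a x y; rewrite DpL1 [X in hom _ X _ _]mulrDr -scalerAr homL mulrDl -scalerAl.
move=> i le_i; rewrite hom_Xn //.
apply: (@lin_ext n (fun f => c * d * Dp (c ^+ i * d ^+ (n - i)) (hom n f c d))
   (fun f => hom (n + n) ('X * Dp 'X^i f) c d * Du)) => //.
- move=> a x y; rewrite homL DpL2 -!mul_polyC; ring.
- by move=> a x y; rewrite DpL2 [X in hom _ X _ _]mulrDr -scalerAr homL mulrDl -scalerAl.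
move=> j le_j; rewrite hom_Xn // Dmon DXmon [X in hom _ X _ _]mulrBl homB !hom_natM hom_Xn; last by lia.
rewrite !natrB //.
have -> : (n + n - (i + j) = (n - i) + (n - j))%N by lia.
rewrite /Du !exprD; ring.
Qed.


Lemma size_mon_eq c d i j : c != 0 -> d != 0 ->
  size (c ^+ i * d ^+ j) = (i * (size c).-1 + j * (size d).-1).+1.
Proof.
move=> c0 d0; rewrite size_mul ?expf_neq0 //.
rewrite (polySpred (expf_neq0 i c0)) (polySpred (expf_neq0 j d0)) !size_exp.
by rewrite addSn addnS /= mulnC [(j * _)%N]mulnC.
Qed.

Lemma arith1 i D A del : (i <= D)%N -> (i * (A + del) + (D - i) * A = D * A + i * del)%N.
Proof. by move=> le; rewrite mulnDr addnAC -mulnDl subnKC. Qed.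

Lemma hom_size_eq (D : nat) (G : {poly K}) c d : (size d < size c)%N -> d != 0 -> G != 0 ->
  (size G <= D.+1)%N ->
  size (hom D G c d) = (D * (size d).-1 + (size G).-1 * (size c - size d)).+1.
Proof.
move=> sdc d0 G0 sG.
have c0 : c != 0 by rewrite -size_poly_gt0 (leq_ltn_trans _ sdc).
set j := (size G).-1.
have ltj : (j < D.+1)%N by rewrite /j prednK // size_poly_gt0.
have Hsc : (size c).-1 = ((size d).-1 + (size c - size d))%N.
  have := size_poly_gt0 d; rewrite d0; lia.
have term i : (i <= D)%N -> size (c ^+ i * d ^+ (D - i)) = (D * (size d).-1 + i * (size c - size d)).+1.
  by move=> le; rewrite size_mon_eq // Hsc arith1.
have Gj : G`_j != 0 by rewrite -lead_coefE lead_coef_eq0.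
have lejD : (j <= D)%N by rewrite -ltnS.
rewrite /hom (bigD1 (Ordinal ltj)) //= size_polyDl.
  by rewrite size_scale // term.
rewrite size_scale // term //.
apply: (big_ind (fun p => (size p < (D * (size d).-1 + j * (size c - size d)).+1)%N)).
- by rewrite size_poly0.
- by move=> x y hx hy; apply: (leq_ltn_trans (size_polyD _ _)); rewrite gtn_max hx hy.
move=> i /= neq; case: (ltngtP i j) => [lt|gt|eq]; last first.
- by exfalso; move: neq; apply/negP/negPn/eqP; apply: val_inj.
- have : (size G <= i)%N by move: gt; rewrite /j; have := size_poly_gt0 G; rewrite G0; lia.
  by move=> h; rewrite nth_default ?scale0r ?size_poly0.
have leiD : (i <= D)%N by rewrite -ltnS.
apply: (leq_ltn_trans (size_scale_leq _ _)); rewrite term // ltnS ltn_add2l.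
by rewrite ltn_mul2r lt andbT subn_gt0.
Qed.


Lemma dvd_coprime_size p q : p %| q -> coprimep p q -> size p = 1%N.
Proof. by move=> pq cpq; apply/eqP; rewrite -coprimepp (coprimep_dvdl pq cpq). Qed.

Lemma hom_coprime n e f c d : (0 < n)%N -> coprimep e f ->
  (size e <= n.+1)%N -> (size f <= n.+1)%N -> (e`_n != 0) || (f`_n != 0) ->
  coprimep c d -> coprimep (hom n e c d) (hom n f c d).
Proof.
move=> n0 cef se sf enz ccd.
have [n' En] : exists n', n = n'.+1 by exists n.-1; rewrite prednK.
have [[u v] /= Buv] := Bezout_eq1_coprimepP _ _ cef.
set E := hom n e c d; set F := hom n f c d.
set M := maxn (size u) (size v).
have HB : hom M u c d * E + hom M v c d * F = d ^+ (M + n).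
  have su : (size u <= M.+1)%N by apply: leq_trans (leq_maxl _ _) (leqnSn _).
  have sv : (size v <= M.+1)%N by apply: leq_trans (leq_maxr _ _) (leqnSn _).
  rewrite /E /F -(homM _ _ su se) -(homM _ _ sv sf).
  by rewrite -homD Buv -polyC1 hom_C scale1r.
set G := gcdp E F.
have GE : G %| E by exact: dvdp_gcdl.
have GF : G %| F by exact: dvdp_gcdr.
have Gd : G %| d ^+ (M + n).
  by rewrite -HB dvdp_add // dvdp_mull.
set G' := gcdp G d.
have G'd : G' %| d by exact: dvdp_gcdr.
have G'G : G' %| G by exact: dvdp_gcdl.
have G'c : G' %| c ^+ n.
  move: enz => /orP [] nz.
  - rewrite -(dvdpZr _ _ nz).
    have : G' %| E by exact: dvdp_trans G'G GE.
    by rewrite /E En hom_low -?En // dvdp_addl // dvdp_mulr.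
  - rewrite -(dvdpZr _ _ nz).
    have : G' %| F by exact: dvdp_trans G'G GF.
    by rewrite /F En hom_low -?En // dvdp_addl // dvdp_mulr.
have cdc : coprimep d (c ^+ n) by rewrite coprimep_expr // coprimep_sym.
have cG'c : coprimep G' (c ^+ n) by exact: coprimep_dvdr G'd cdc.
have sG' : size G' = 1%N by exact: dvd_coprime_size G'c cG'c.
have cGd : coprimep G d by rewrite -gcdp_eqp1 -size_poly_eq1 sG'.
have cGdM : coprimep G (d ^+ (M + n)) by exact: coprimep_expr.
rewrite coprimep_def -/G.
by rewrite (dvd_coprime_size Gd cGdM).
Qed.


Lemma coefM_top p q i j : (size p <= i.+1)%N -> (size q <= j.+1)%N ->
  (p * q)`_(i + j) = p`_i * q`_j.
Proof.
move=> sp sq; rewrite coefM.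
have lti : (i < (i + j).+1)%N by rewrite ltnS leq_addr.
rewrite (bigD1 (Ordinal lti)) //= addKn big1 ?addr0 // => l /eqP neq.
case: (ltngtP l i) => [lt|gt|eq]; last by exfalso; apply: neq; apply: val_inj.
- by rewrite [q`_ _]nth_default ?mulr0 //; apply: leq_trans sq _; lia.
- by rewrite nth_default ?mul0r //; apply: leq_trans sp _.
Qed.

Lemma size_Dp_ab (a b : {poly K}) : (size b < size a)%N -> b != 0 ->
  ((size a - size b)%:R != 0 :> K) -> size (Dp a b) = (size a + size b - 2)%N.
Proof.
move=> sba b0 nz.
have a0 : a != 0 by rewrite -size_poly_gt0 (leq_ltn_trans _ sba).
have sb0 : (0 < size b)%N by rewrite size_poly_gt0.
set N := (size a).-1; set B := (size b).-1.
have HsA : size a = N.+1 by rewrite /N prednK // size_poly_gt0.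
have HsB : size b = B.+1 by rewrite /B prednK.
have BN : (B < N)%N by move: sba; rewrite HsA HsB.
case: N HsA BN => // N' HsA BN.
have sa' : (size a^`() <= N'.+1)%N by rewrite -ltnS -HsA lt_size_deriv.
have sb' : (size b^`() <= B)%N by rewrite -ltnS -HsB lt_size_deriv.
have up : (size (Dp a b) <= N'.+1 + B)%N.
  rewrite /Dp (leq_trans (size_polyD _ _)) // size_polyN geq_max.
  apply/andP; split; apply: (leq_trans (size_polyMleq _ _)); rewrite ?HsA ?HsB.
    by rewrite addnS /= leq_add2r.
  by rewrite addSn /= leq_add2l.
have t1 : (a^`() * b)`_(N' + B) = a`_N'.+1 * b`_B * N'.+1%:R.
  by rewrite coefM_top ?HsB // coef_deriv -mulr_natr; ring.
have t2 : (a * b^`())`_(N' + B) = a`_N'.+1 * b`_B * B%:R.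
  case: B HsB sb' BN up t1 => [|B] HsB sb' BN up t1.
    move: sb'; rewrite leqn0 size_poly_eq0 => /eqP ->.
    by rewrite mulr0 coef0 mulr0.
  rewrite -addSnnS coefM_top ?HsA ?HsB // coef_deriv -mulr_natr; ring.
have lc : (Dp a b)`_(N' + B) != 0.
  rewrite /Dp coefB t1 t2 -mulrBr -natrB; last by lia.
  have la : a`_N'.+1 != 0.
    have : lead_coef a != 0 by rewrite lead_coef_eq0.
    by rewrite lead_coefE HsA.
  have lb : b`_B != 0.
    have : lead_coef b != 0 by rewrite lead_coef_eq0.
    by rewrite lead_coefE HsB.
  have ln : (N'.+1 - B)%:R != 0 :> K by move: nz; rewrite HsA HsB subSS.
  by rewrite !mulf_neq0.
apply/eqP; rewrite eqn_leq; apply/andP; split.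
  by move: up; rewrite HsA HsB; lia.
rewrite HsA HsB.
have : (N' + B < size (Dp a b))%N.
  rewrite ltnNge; apply/negP => h; move: lc; by rewrite nth_default // eqxx.
lia.
Qed.

End Hom.

Section R.
Variable K : fieldType.

Lemma in_qpoly_eq0 (q : {poly K}) (hI : monic_irreducible_poly q) (p : {poly K}) :
  (in_qpoly q p == 0) = (q %| p).
Proof.
have qm : q \is monic by case: hI.
rewrite /dvdp (Pdiv.IdomainMonic.modpE qm).
apply/eqP/eqP => h.
  by have := congr1 val h; rewrite /= (mk_monicE hI).
by apply: val_inj; rewrite /= (mk_monicE hI) h.
Qed.

Lemma root_field (q b : {poly K}) : irreducible_poly q -> q %| b -> q %| b^`() -> b != 0 ->
  exists (L : fieldType) (f : {rmorphism K -> L}) (x : L),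
    (map_poly f b).[x] = 0 /\ mup x (map_poly f b) != 1%N.
Proof.
move=> iq qb qb' b0.
have q0 : q != 0 by case: iq => s _; rewrite -size_poly_gt0 (ltn_trans _ s).
set c := (lead_coef q)^-1.
have c0 : c != 0 by rewrite invr_eq0 lead_coef_eq0.
set q1 := c *: q.
have eq1 : q1 %= q by exact: eqp_scale.
have mq1 : q1 \is monic by rewrite monicE lead_coefZ mulVf // lead_coef_eq0.
have iq1 : irreducible_poly q1.
  case: iq => s H; split; first by rewrite size_scale.
  move=> r sr; rewrite dvdpZr // => rq; apply: eqp_trans (H r sr rq) _.
  by rewrite eqp_sym.
have hI : monic_irreducible_poly q1 by split.
pose L : fieldType := {poly %/ q1 with hI}.
pose f : {rmorphism K -> L} := qpolyC q1.
pose x : L := in_qpoly q1 'X.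
have mapE (p : {poly K}) : (map_poly f p).[x] = in_qpoly q1 p.
  by rewrite -in_qpoly_comp_horner comp_polyXr.
have r0 (p : {poly K}) : q %| p -> (map_poly f p).[x] = 0.
  by move=> qp; rewrite mapE; apply/eqP; rewrite (in_qpoly_eq0 hI) /q1 dvdpZl.
exists L, f, x; split; first exact: r0.
set B := map_poly f b.
have B0 : B != 0 by rewrite map_poly_eq0.
have : (2 <= mup x B)%N.
  rewrite mup_geq //.
  have /factor_theorem [B1 EB] : root B x by apply/eqP; exact: r0.
  have : root B1 x.
    have := r0 _ qb'; rewrite -deriv_map -/B EB derivM derivXsubC mulr1.
    by rewrite hornerD hornerM hornerXsubC subrr mulr0 add0r /root => ->.
  move=> /factor_theorem [B2 EB1].
  by rewrite EB EB1 -mulrA -expr2 dvdp_mull.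
by case: (mup x B) => [|[|]].
Qed.

End R.

Lemma arA x y : (0 < x)%N -> y = (x + y).-1 -> x = 1%N.
Proof. lia. Qed.
Lemma arC x y z : (z <= y)%N -> (z <= x)%N -> (x + y).-1 = (z + z).-1 -> (0 < z)%N -> x = y.
Proof. lia. Qed.

Lemma final_arith n A del phi t sH sD :
  (2 <= n)%N -> (1 <= del)%N -> (2 <= A + del)%N -> (phi < n)%N -> (t <= n + phi - 1)%N ->
  (1 <= sD)%N -> (sD <= 2*A + del)%N ->
  sH = ((n+n-2)*A + t*del).+1 ->
  (n*A + n*del + (n*A + phi*del))%N = (sH + sD).-1 ->
  [\/ sD = 1%N, sH = 1%N | sH = sD] -> False.
Proof.
move=> n2 d1 Ad pn tb sD1 sDb EH Eq cases.
have h1 : (t * del <= (n + phi - 1) * del)%N by rewrite leq_mul2r tb orbT.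
have h2 : ((n + phi - 1) * del = n * del + phi * del - del)%N.
  by rewrite mulnBl mul1n mulnDl.
have h3 : ((n + n - 2) * A = n * A + n * A - 2 * A)%N by rewrite mulnBl mulnDl.
have h4 : (2 * A <= n * A)%N by rewrite leq_mul2r n2 orbT.
have h5 : (2 * del <= n * del)%N by rewrite leq_mul2r n2 orbT.
move: h1 h2 h3 h4 h5 EH Eq cases.
move: (t * del)%N (n * del)%N (phi * del)%N (n * A)%N ((n + n - 2) * A)%N ((n + phi - 1) * del)%N => Q nd pd nA P4 R.
move=> h1 h2 h3 h4 h5 EH Eq [] ?; lia.
Qed.

Lemma arH n y : (2 <= n)%N -> (y <= n)%N -> (n.+1 + y - 2 <= (n + n - 2).+1)%N.
Proof. lia. Qed.

Lemma arI sc sd : (2 < sc)%N -> (sd < sc)%N -> (0 < sd)%N -> (2 <= sd.-1 + (sc - sd))%N.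
Proof. lia. Qed.
Lemma arJ x n y : (x <= n.+1 + y - 2)%N -> (0 < y)%N -> (x.-1 <= n + y.-1 - 1)%N.
Proof. lia. Qed.
Lemma arK sc sd z : (sd < sc)%N -> (0 < sd)%N -> (z <= sc + sd - 2)%N -> (z <= 2 * sd.-1 + (sc - sd))%N.
Proof. lia. Qed.
Lemma arL x y : (x + y = x.+1 + y.+1 - 2)%N.
Proof. lia. Qed.

Section Cases.
Variable K : fieldType.

Lemma irr_factor (p : {poly K}) : (1 < size p)%N -> exists q, irreducible_poly q /\ q %| p.
Proof.
move: {2}(size p) (leqnn (size p)) => N; elim: N p => [|N IH] p sp sp1.
  by move: sp1; rewrite ltnNge (leq_trans sp).
have p0 : p != 0 by rewrite -size_poly_gt0 (ltn_trans _ sp1).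
case: (classic (irreducible_poly p)) => [ip|nip]; first by exists p; split.
have [q nq] : exists q : {poly K}, ~ (size q != 1%N -> q %| p -> q %= p).
  apply: not_all_ex_not => H; apply: nip; split => //.
have sq1 : size q != 1%N by apply/negP => h; apply: nq => /negP.
have qp : q %| p by apply/negP => h; apply: nq => _ /negP.
have nqp : ~~ (q %= p) by apply/negP => h; apply: nq.
have q0 : q != 0 by apply/eqP => q0; move: qp; rewrite q0 dvd0p; apply/negP.
have sq : (size q < size p)%N.
  rewrite ltn_neqAle dvdp_leq // andbT; apply/negP => h; move: nqp.
  by rewrite -dvdp_size_eqp // h.
have sq1' : (1 < size q)%N.
  by move: sq1; rewrite neq_ltn ltnS leqn0 size_poly_eq0 (negbTE q0) orFb.
have [r [ir rq]] := IH q (leq_trans sq sp) sq1'.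
by exists r; split => //; apply: dvdp_trans rq qp.
Qed.


Lemma coprime_Dp_b (a b : {poly K}) : b != 0 -> coprimep a b ->
  (forall (L : fieldType) (f : {rmorphism K -> L}) (x : L),
      (map_poly f b).[x] = 0 -> mup x (map_poly f b) = 1%N) ->
  coprimep (Dp a b) b.
Proof.
move=> b0 cab Hp; apply: contraT => nc.
set g := gcdp (Dp a b) b.
have g0 : g != 0 by rewrite gcdp_eq0 negb_and b0 orbT.
have sg : (1 < size g)%N.
  move: nc; rewrite coprimep_def -/g neq_ltn ltnS leqn0 size_poly_eq0 (negbTE g0).
  by case: ltngtP.
have [q [iq qg]] := irr_factor sg.
have qb : q %| b by apply: dvdp_trans qg (dvdp_gcdr _ _).
have qD : q %| Dp a b by apply: dvdp_trans qg (dvdp_gcdl _ _).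
have qab' : q %| a * b^`().
  by move: qD; rewrite /Dp dvdp_subr // dvdp_mull.
have cqa : coprimep q a by apply: coprimep_dvdr qb _; rewrite coprimep_sym.
have qb' : q %| b^`() by rewrite -(Gauss_dvdpr _ cqa).
have [L [f [x [r m]]]] := root_field iq qb qb' b0.
by move: m; rewrite Hp // eqxx.
Qed.

Lemma irr_cases (g H Du : {poly K}) : g %= H * Du -> H != 0 -> Du != 0 ->
  (irreducible_poly g \/ exists h, irreducible_poly h /\ g %= h ^+ 2) ->
  [\/ size Du = 1%N, size H = 1%N | size H = size Du].
Proof.
move=> gHD H0 D0 [ig|[h [ih gh]]].
  have Dg : Du %| g by rewrite (eqp_dvdr _ gHD) dvdp_mull.
  have [s1|s1] := eqVneq (size Du) 1%N; first by constructor 1.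
  have Deq := apply_irredp ig s1 Dg.
  constructor 2.
  have := eqp_size (eqp_trans Deq gHD); rewrite size_mul //.
  by have := size_poly_gt0 H; rewrite H0; move=> /idP h1 h2; apply: arA h1 h2.
have e2 : H * Du %= h ^+ 2 by apply: eqp_trans gh; rewrite eqp_sym.
have Dh : Du %| h ^+ 2 by rewrite -(eqp_dvdr _ e2) dvdp_mull.
have Hh : H %| h ^+ 2 by rewrite -(eqp_dvdr _ e2) dvdp_mulr.
have [hD|nhD] := boolP (h %| Du); last first.
  constructor 1; apply: (dvd_coprime_size Dh).
  by rewrite coprimep_sym coprimep_expl // (irreducible_poly_coprime _ ih).
have [hH|nhH] := boolP (h %| H); last first.
  constructor 2; apply: (dvd_coprime_size Hh).
  by rewrite coprimep_sym coprimep_expl // (irreducible_poly_coprime _ ih).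
constructor 3.
have h0 : h != 0 by exact: irredp_neq0.
have l1 := dvdp_leq D0 hD; have l2 := dvdp_leq H0 hH.
have := eqp_size e2; rewrite size_mul // expr2 size_mul //.
by have := size_poly_gt0 h; rewrite h0; move=> /idP h1 h2; apply: arC l1 l2 h2 h1.
Qed.


Lemma size_coef_n (p : {poly K}) n : (size p <= n.+1)%N -> p`_n != 0 -> size p = n.+1.
Proof.
move=> sp pn; apply/eqP; rewrite eqn_leq sp /=; rewrite ltnNge; apply/negP => h.
by move: pn; rewrite nth_default // eqxx.
Qed.

Lemma arD x y : (0 < x)%N -> (0 < y)%N -> ((x.-1 + y).-1 <= x + y - 2)%N.
Proof. lia. Qed.
Lemma arE x y : (0 < x)%N -> (0 < y)%N -> ((x + y.-1).-1 <= x + y - 2)%N.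
Proof. lia. Qed.

Lemma size_Dp_le (p q : {poly K}) : p != 0 -> q != 0 ->
  (size (Dp p q) <= size p + size q - 2)%N.
Proof.
move=> p0 q0.
have sp := lt_size_deriv p0; have sq := lt_size_deriv q0.
have p1 : (0 < size p)%N by rewrite size_poly_gt0.
have q1 : (0 < size q)%N by rewrite size_poly_gt0.
rewrite /Dp (leq_trans (size_polyD _ _)) // size_polyN geq_max.
apply/andP; split; apply: (leq_trans (size_polyMleq _ _)).
  apply: leq_trans (arD p1 q1); rewrite -!subn1 leq_sub2r // leq_add2r.
  by rewrite subn1 -ltnS prednK.
apply: leq_trans (arE p1 q1); rewrite -!subn1 leq_sub2r // leq_add2l.
by rewrite subn1 -ltnS prednK.
Qed.

Lemma DpZZ k (p q : {poly K}) : Dp (k *: p) (k *: q) = (k * k) *: Dp p q.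
Proof. by rewrite /Dp !derivZ -!mul_polyC polyCM; ring. Qed.


Lemma core (a b c d e f : {poly K}) (n : nat) :
  coprimep a b -> b != 0 -> (size b < size a)%N -> ((size a - size b)%:R != 0 :> K) ->
  Dp a b != 0 ->
  (irreducible_poly (deriv_num a b) \/
     exists h, irreducible_poly h /\ deriv_num a b %= h ^+ 2) ->
  coprimep (Dp a b) b ->
  (2 <= n)%N -> (size d < size c)%N -> d != 0 -> (2 < size c)%N -> coprimep c d ->
  coprimep e f -> (size e <= n.+1)%N -> (size f <= n.+1)%N -> (e`_n != 0) || (f`_n != 0) ->
  a * hom n f c d = b * hom n e c d -> hom n f c d != 0 -> False.
Proof.
move=> cab b0 sba nz Dw0 hg cDb n2 sdc d0 sc2 ccd cef se sf enz comp F0.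
set E := hom n e c d; set F := hom n f c d.
have a0 : a != 0 by rewrite -size_poly_gt0 (leq_ltn_trans _ sba).
have c0 : c != 0 by rewrite -size_poly_gt0 (ltn_trans _ sc2).
have n0 : (0 < n)%N by apply: leq_trans n2.
have cEF : coprimep E F := hom_coprime n0 cef se sf enz ccd.
have aE : a %| E by rewrite -(Gauss_dvdpr _ cab) -comp dvdp_mulIl.
case/dvdpP: aE => rho Erho.
have Frho : F = rho * b.
  apply: (mulIf a0); rewrite [F * a]mulrC; have := comp; rewrite -/E -/F Erho => ->; ring.
have srho : size rho = 1%N.
  apply: (dvd_coprime_size (q := F)); first by rewrite Frho dvdp_mulr.
  by apply: coprimep_dvdr cEF; rewrite Erho dvdp_mulr.
move/eqP: srho => /size_poly1P [r0 r0nz Er0].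
have E0 : E != 0 by rewrite Erho Er0 mulf_neq0 // polyC_eq0.
have e0 : e != 0 by apply: contraNneq E0 => e0; rewrite /E e0 hom0.
have f0 : f != 0 by apply: contraNneq F0 => f0; rewrite /F f0 hom0.
have sa : size a = size E by rewrite Erho Er0 size_Cmul.
have sb : size b = size F by rewrite Frho Er0 size_Cmul.
have sE := hom_size_eq sdc d0 e0 se.
have sF := hom_size_eq sdc d0 f0 sf.
have del0 : (0 < size c - size d)%N by rewrite subn_gt0.
have pfe : ((size f).-1 < (size e).-1)%N.
  move: sba; rewrite sa sb sE sF ltnS ltn_add2l ltn_mul2r => /andP [].
  by [].
have sen : size e = n.+1.
  move: enz => /orP [] nz'; first exact: size_coef_n.
  have hle : ((size e).-1 <= n)%N by move: se; case: (size e).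
  by move: pfe; rewrite (size_coef_n sf nz') /= ltnNge hle.
set Dv := Dp e f.
have ch := chain c d se sf.
have sfn : (size f <= n)%N by move: pfe; rewrite sen /=; case: (size f).
have sDv : (size Dv <= (n + n - 2).+1)%N.
  by apply: (leq_trans (size_Dp_le e0 f0)); rewrite sen; apply: arH.
set H := hom (n + n - 2) Dv c d.
have hX : hom (n + n) ('X * Dv) c d = c * d * H.
  rewrite -{1}(subnKC (_ : 2 <= n + n)%N); last by apply: leq_trans n2 (leq_addr _ _).
  have hX2 : hom 2 'X c d = c * d by rewrite -['X]expr1 hom_Xn //= !expr1.
  by rewrite homM ?size_polyX // hX2.
have DEF : Dp E F = H * Dp c d.
  apply: (mulfI (mulf_neq0 c0 d0)); rewrite ch hX /Dp; ring.
have DEF' : H * Dp c d = (r0 * r0) *: Dp a b.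
  by rewrite -DEF Erho Frho Er0 !mul_polyC DpZZ.
have rr : r0 * r0 != 0 by rewrite mulf_neq0.
have HD0 : H * Dp c d != 0 by rewrite DEF' scaler_eq0 negb_or rr.
have H0 : H != 0 by apply: contraNneq HD0 => ->; rewrite mul0r.
have Du0 : Dp c d != 0 by apply: contraNneq HD0 => ->; rewrite mulr0.
have Dv0 : Dv != 0 by apply: contraNneq H0 => dv; rewrite /H dv hom0.
have sH := hom_size_eq sdc d0 Dv0 sDv.
have sDu := size_Dp_le c0 d0.
have sDw := size_Dp_ab sba b0 nz.
have sHD : (size H + size (Dp c d)).-1 = size (Dp a b).
  by rewrite -size_mul // DEF' size_scale.
have sDvle := size_Dp_le e0 f0.
have gE : deriv_num a b %= H * Dp c d.
  rewrite /deriv_num /= -[a^`() * b - a * b^`()]/(Dp a b).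
  set G := gcdp (Dp a b) (b ^+ 2).
  have cG : coprimep (Dp a b) (b ^+ 2) by apply: coprimep_expr.
  have G1 : G %= 1 by rewrite -size_poly_eq1 (coprimep_size_gcd cG).
  have e1 : Dp a b %= Dp a b %/ G.
    rewrite -{1}(divpK (dvdp_gcdl (Dp a b) (b ^+ 2))) -/G.
    by rewrite -[X in _ %= X]mulr1 eqp_mull.
  apply: eqp_trans (_ : _ %= Dp a b) _; first by rewrite eqp_sym.
  by rewrite DEF' eqp_sym eqp_scale.
have cases := irr_cases gE H0 Du0 hg.
apply: (final_arith (n:=n) (A:=(size d).-1) (del:=size c - size d) (phi:=(size f).-1)
   (t:=(size Dv).-1) (sH:=size H) (sD:=size (Dp c d))) => //.
- by apply: arI => //; rewrite size_poly_gt0.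
- by move: pfe; rewrite sen.
- by apply: arJ; rewrite -?sen // size_poly_gt0.
- by rewrite size_poly_gt0.
- by apply: arK => //; rewrite size_poly_gt0.
by rewrite sHD sDw sa sb sE sF sen arL.
Qed.


Lemma hom1E (p u v : {poly K}) : hom 1 p u v = p`_0 *: v + p`_1 *: u.
Proof.
rewrite /hom !big_ord_recr big_ord0 /= add0r subn0 subnn.
by rewrite !expr0 !expr1 mul1r mulr1.
Qed.

Lemma size_le_drop (p : {poly K}) m : (size p <= m.+1)%N -> p`_m = 0 -> (size p <= m)%N.
Proof.
move=> sp pm; apply/leq_sizeP => j; rewrite leq_eqVlt => /orP [/eqP <- //|lt].
by rewrite nth_default // (leq_trans sp).
Qed.

End Cases.

Lemma arM1 x y : (x <= (maxn x.-1 y).+1)%N.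
Proof. lia. Qed.
Lemma arM2 x y : (y <= (maxn x y.-1).+1)%N.
Proof. lia. Qed.

Lemma arN x y : (y < x)%N -> (1 < maxn x.-1 y.-1)%N -> (2 < x)%N.
Proof. lia. Qed.
Lemma arO x y : (x <= y)%N -> (1 < maxn x.-1 y.-1)%N -> (2 < y)%N.
Proof. lia. Qed.

Lemma ar_tame x y : (y < x)%N -> (0 < x - y)%N.
Proof. lia. Qed.

Theorem mainTheorem9 (k : fieldType) (a b : {poly k}) :
  (* w = a/b in lowest terms, non-constant *)
  rat_lowest a b ->
  (0 < rdeg a b)%N ->
  (* k(X)/k(w) separable, i.e. w' <> 0 *)
  a^`() * b - a * b^`() != 0 ->
  (* all ramification of w is tame *)
  tame_ramification a b ->
  (* pole of order >= 2 at infinity *)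
  (size b + 2 <= size a)%N ->
  (* all finite poles over kbar are simple *)
  (forall (L : fieldType) (f : {rmorphism k -> L}) (x : L),
      (map_poly f b).[x] = 0 -> mup x (map_poly f b) = 1%N) ->
  (* numerator of w' irreducible or square of an irreducible *)
  (irreducible_poly (deriv_num a b) \/
   exists h : {poly k}, irreducible_poly h /\ deriv_num a b %= h ^+ 2) ->
  indecomposable a b.
Proof.
move=> [b0 cab] _ Dw0 tame sab poles hg.
have sba : (size b < size a)%N by apply: leq_trans sab; rewrite addn2.
have nz : ((size a - size b)%:R != 0 :> k).
  rewrite natf_neq0_pchar; apply/pnatP; first exact: ar_tame.
  move=> p pp pdiv; rewrite inE /=; apply/negP => pc.
  have [h _] := tame p pc; move: h; rewrite /ram_index_inf sba /=.
  by rewrite pdiv.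
have cDb := coprime_Dp_b b0 cab poles.
move=> [c [d [e [f [[d0 ccd] [f0 cef] m2 n2 [F0 comp]]]]]].
move: m2 n2 F0 comp; rewrite /rdeg => m2 n2 F0 comp.
set n := maxn (size e).-1 (size f).-1 in n2 F0 comp.
have se : (size e <= n.+1)%N by apply: arM1.
have sf : (size f <= n.+1)%N by apply: arM2.
rewrite /is_composition /= -/n !homog_hom // in F0 comp.
have n0 : (0 < n)%N by apply: leq_trans n2.
have enz : (e`_n != 0) || (f`_n != 0).
  rewrite /n; case: (leqP (size e).-1 (size f).-1) => h.
    by rewrite -lead_coefE lead_coef_eq0 f0 orbT.
  rewrite -lead_coefE lead_coef_eq0.
  by apply/orP; left; apply: contraTneq h => ->; rewrite size_poly0.
have [sdc|scd] := ltnP (size d) (size c).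
  apply: (core cab b0 sba nz Dw0 hg cDb n2 sdc d0 _ ccd cef se sf enz comp F0).
  by move: m2; apply: arN.
have m3 : (2 < size d)%N by move: m2; apply: arO.
set m := (size d).-1.
set P := c`_m / lead_coef d.
set d1 := c - P *: d.
have ld0 : lead_coef d != 0 by rewrite lead_coef_eq0.
have sd1 : (size d1 < size d)%N.
  have : (size d1 <= m)%N.
    apply: size_le_drop.
      rewrite /m prednK ?size_poly_gt0 //.
      by rewrite (leq_trans (size_polyD _ _)) // size_polyN geq_max scd size_scale_leq.
    by rewrite coefB coefZ /P -lead_coefE -mulrA mulVf // mulr1 subrr.
  by rewrite /m; case: (size d) m3.
have d10 : d1 != 0.
  apply/eqP => h; have cPd : c = P *: d by apply/eqP; rewrite -subr_eq0 -/d1 h.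
  have dc : d %| c by rewrite cPd -mul_polyC dvdp_mull.
  have s1 := dvd_coprime_size dc (_ : coprimep d c); move: m3.
  by rewrite s1 // coprimep_sym.
have cdd1 : coprimep d d1.
  have -> : d1 = (- P%:P) * d + c by rewrite /d1 -mul_polyC; ring.
  by rewrite coprimep_addl_mul coprimep_sym.
set g := P%:P * 'X + 1%:P.
have sg : (size g <= 2)%N.
  by rewrite /g size_MXaddC oner_eq0 andbF size_polyC; case: (P != 0).
have sX : (size ('X : {poly k}) <= 2)%N by rewrite size_polyX.
have g0 : g`_0 = 1 by rewrite /g coefD coefMX !coefC /= add0r.
have g1 : g`_1 = P by rewrite /g coefD coefMX !coefC /= addr0.
set e1 := hom n e g 'X.
set f1 := hom n f g 'X.
have hg1 (u v : {poly k}) : hom 1 g u v = v + P *: u by rewrite hom1E g0 g1 scale1r.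
have hX1 (u v : {poly k}) : hom 1 'X u v = u by rewrite hom1E coefX coefX /= scale0r add0r scale1r.
have Ee1 : hom n e1 d d1 = hom n e c d.
  by rewrite /e1 hom_comp // hg1 hX1 /d1 subrK.
have Ef1 : hom n f1 d d1 = hom n f c d.
  by rewrite /f1 hom_comp // hg1 hX1 /d1 subrK.
have se1 : (size e1 <= n.+1)%N.
  by rewrite -[n in (_ <= n.+1)%N]muln1 hom_size_le.
have sf1 : (size f1 <= n.+1)%N.
  by rewrite -[n in (_ <= n.+1)%N]muln1 hom_size_le.
have ce1 : e1`_n = e.[P].
  apply: polyC_inj; rewrite -hom10 // /e1 hom_comp // hg1 hX1 add0r.
  by rewrite -mul_polyC mulr1 homP1.
have cf1 : f1`_n = f.[P].
  apply: polyC_inj; rewrite -hom10 // /f1 hom_comp // hg1 hX1 add0r.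
  by rewrite -mul_polyC mulr1 homP1.
have enz1 : (e1`_n != 0) || (f1`_n != 0).
  rewrite ce1 cf1; case: (boolP (root e P)) => [r|nr]; last by apply/orP; left.
  by rewrite (coprimep_root cef r) orbT.
have cgX : coprimep g 'X.
  by rewrite coprimepX /root /g !hornerE oner_eq0.
have cef1 : coprimep e1 f1 := hom_coprime n0 cef se sf enz cgX.
apply: (core cab b0 sba nz Dw0 hg cDb n2 sd1 d10 m3 cdd1 cef1 se1 sf1 enz1).
  by rewrite Ee1 Ef1.
by rewrite Ef1.
Qed.
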